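(* Let $R$ be a unital ring and let $S$ be an inverse submonoid with zero of the multiplicative monoid of $R$. Suppose that (1) whenever $a,b\in S$ are orthogonal, $a+b\in S$; and (2) whenever $e\in S$ is an idempotent, $1-e\in S$. Then $S$ is a Boolean inverse monoid.
   Context: In an inverse semigroup with zero, $s,t$ are orthogonal if $s^{-1}t=0=st^{-1}$, and compatible if $s^{-1}t,st^{-1}$ are idempotents; the natural partial order is used. A Boolean inverse monoid is an inverse monoid with zero in which every pair of compatible elements has a join, multiplication distributes over these joins, and the idempotents form a Boolean algebra (a distributive lattice with bottom in which each principal order ideal is a unital Boolean algebra). *)

(* Defs.v *)
From mathcomp Require Import all_boot.
Set Implicit Arguments.
Unset Strict Implicit.
Unset Printing Implicit Defensive.

Section BIM.
Variables (T : Type) (mul : T -> T -> T) (one zero : T) (S : T -> Prop).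
Local Notation "x * y" := (mul x y).

Definition is_inv (s t : T) : Prop := S t /\ s * t * s = s /\ t * s * t = t.

Definition inverse_monoid_with_zero : Prop :=
  S one /\ S zero /\
  (forall x y, S x -> S y -> S (x * y)) /\
  (forall x y z, S x -> S y -> S z -> x * (y * z) = (x * y) * z) /\
  (forall x, S x -> one * x = x /\ x * one = x) /\
  (forall x, S x -> zero * x = zero /\ x * zero = zero) /\
  (forall s, S s -> exists t, is_inv s t /\ forall t', is_inv s t' -> t' = t).

Definition idem (e : T) : Prop := S e /\ e * e = e.

Definition nleq (s t : T) : Prop := S s /\ S t /\ exists e, idem e /\ s = t * e.

Definition ism_orthogonal (s t : T) : Prop :=
  exists s' t', [/\ is_inv s s', is_inv t t', s' * t = zero & s * t' = zero].

Definition ism_compatible (s t : T) : Prop :=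
  exists s' t', [/\ is_inv s s', is_inv t t', idem (s' * t) & idem (s * t')].

Definition is_join (s t u : T) : Prop :=
  [/\ S u, nleq s u, nleq t u & forall v, nleq s v -> nleq t v -> nleq u v].

Definition eleq (e f : T) : Prop := idem e /\ idem f /\ nleq e f.
Definition is_ejoin (e f u : T) : Prop :=
  [/\ eleq e u, eleq f u & forall v, eleq e v -> eleq f v -> eleq u v].
Definition is_emeet (e f m : T) : Prop :=
  [/\ eleq m e, eleq m f & forall v, eleq v e -> eleq v f -> eleq v m].

(* idempotents form a Boolean algebra: a distributive lattice with bottom in
   which each principal order ideal is a unital Boolean algebra *)
Definition idempotents_boolean : Prop :=
  [/\ (forall e f, idem e -> idem f -> exists u, is_ejoin e f u),
      (forall e f, idem e -> idem f -> exists m, is_emeet e f m),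
      (forall e f g j m1 m2 m3, idem e -> idem f -> idem g ->
          is_ejoin f g j -> is_emeet e j m1 -> is_emeet e f m2 -> is_emeet e g m3 ->
          is_ejoin m2 m3 m1) &
      exists b, [/\ idem b, (forall e, idem e -> eleq b e) &
        (forall e f, eleq f e ->
           exists g, [/\ eleq g e, is_emeet f g b & is_ejoin f g e])]].

Definition boolean_inverse_monoid : Prop :=
  [/\ inverse_monoid_with_zero,
      (forall s t, S s -> S t -> ism_compatible s t -> exists u, is_join s t u),
      (forall s t u a, S s -> S t -> S a -> ism_compatible s t -> is_join s t u ->
          is_join (a * s) (a * t) (a * u) /\ is_join (s * a) (t * a) (u * a)) &
      idempotents_boolean].

End BIM.

(* Main.v *)
From mathcomp Require Import all_boot all_algebra.
Require Import Defs.
From Stdlib Require Import ClassicalEpsilon.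
Import GRing.Theory.
Set Implicit Arguments. Unset Strict Implicit.
Local Open Scope ring_scope.

Section Pf.
Variables (R : pzRingType) (S : R -> Prop).
Hypothesis HS : inverse_monoid_with_zero (@GRing.mul R) 1 0 S.
Hypothesis Horth : forall a b, S a -> S b -> ism_orthogonal (@GRing.mul R) 0 S a b -> S (a + b).
Hypothesis Hcompl : forall e, idem (@GRing.mul R) S e -> S (1 - e).

Local Notation idm := (idem (@GRing.mul R) S).
Local Notation isi := (is_inv (@GRing.mul R) S).
Local Notation nlq := (nleq (@GRing.mul R) S).
Local Notation elq := (eleq (@GRing.mul R) S).

Lemma S1 : S 1. Proof. by case: HS. Qed.
Lemma S0 : S 0. Proof. by case: HS => _ []. Qed.
Lemma SM x y : S x -> S y -> S (x * y). Proof. by case: HS => _ [_ [H _]]; apply: H. Qed.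
Lemma Hinv s : S s -> exists t, isi s t /\ forall t', isi s t' -> t' = t.
Proof. by case: HS => _ [_ [_ [_ [_ [_ H]]]]]; apply: H. Qed.

Definition inv s := epsilon (inhabits (0:R)) (fun t => isi s t).
Lemma invP s : S s -> isi s (inv s).
Proof. move=> Ss; case: (Hinv Ss) => t [Ht _]; exact: (epsilon_spec _ _ (ex_intro _ t Ht)). Qed.
Lemma inv_uniq s t : S s -> isi s t -> t = inv s.
Proof. move=> Ss Ht; case: (Hinv Ss) => t0 [_ U]; by rewrite (U _ Ht) (U _ (invP Ss)). Qed.

Lemma Sinv s : S s -> S (inv s). Proof. by case/invP. Qed.
Lemma inv1 s : S s -> s * inv s * s = s. Proof. by case/invP => _ []. Qed.
Lemma inv2 s : S s -> inv s * s * inv s = inv s. Proof. by case/invP => _ []. Qed.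
Lemma inv1x x s : S s -> x * s * inv s * s = x * s.
Proof. by move=> Ss; rewrite -!mulrA (mulrA s) inv1. Qed.
Lemma inv2x x s : S s -> x * inv s * s * inv s = x * inv s.
Proof. by move=> Ss; rewrite -!mulrA (mulrA (inv s)) inv2. Qed.
Lemma idemx x e : idm e -> x * e * e = x * e.
Proof. by case=> _ ee; rewrite -mulrA ee. Qed.

Lemma inv_inv s : S s -> inv (inv s) = s.
Proof. move=> Ss; apply/esym/inv_uniq; first exact: Sinv.
by split=> //; rewrite inv1 ?inv2. Qed.

Lemma idem_inv e : idm e -> inv e = e.
Proof. move=> [Se ee]; apply/esym/inv_uniq => //. by rewrite /is_inv ee ee. Qed.

Lemma idem_mul e f : idm e -> idm f -> idm (e * f).
Proof.
move=> Ie If; have [Se ee] := Ie; have [Sf ff] := If.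
have Sef : S (e * f) by apply: SM.
have [Sx [H1 H2]] := invP Sef; set x := inv (e * f) in Sx H1 H2 *.
rewrite !mulrA in H1 H2.
have H2x y : y * x * e * f * x = y * x.
  have -> : y*x*e*f*x = y*(x*e*f*x) by rewrite !mulrA.
  by rewrite H2.
have E1 : f * x * e = x.
  apply: inv_uniq => //; split; first by apply: SM => //; apply: SM.
  split.
  - by rewrite !mulrA (idemx _ If) (idemx _ Ie).
  - by rewrite !mulrA (idemx _ Ie) (idemx _ If) H2x.
have xx : x * x = x by rewrite -{1 2}E1 !mulrA H2x E1.
have Ix : idm x by [].
have E2 : e * f = inv x.
  apply: inv_uniq => //; split => //; split; by rewrite !mulrA.
by rewrite E2 idem_inv.
Qed.

Lemma idem_comm e f : idm e -> idm f -> e * f = f * e.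
Proof.
move=> Ie If; have Ief := idem_mul Ie If; have Ife := idem_mul If Ie.
have [Se ee] := Ie; have [Sf ff] := If.
rewrite -(idem_inv Ief); apply/esym/inv_uniq; first by case: Ief.
split; first by case: Ife.
split.
- rewrite !mulrA (idemx _ If) (idemx _ Ie).
  have -> : e*f*e*f = (e*f)*(e*f) by rewrite !mulrA.
  by case: Ief.
- rewrite !mulrA (idemx _ Ie) (idemx _ If).
  have -> : f*e*f*e = (f*e)*(f*e) by rewrite !mulrA.
  by case: Ife.
Qed.

Lemma d_idem s : S s -> idm (inv s * s).
Proof. move=> Ss; split; first by apply: SM => //; apply: Sinv.
by rewrite mulrA inv2. Qed.
Lemma r_idem s : S s -> idm (s * inv s).
Proof. move=> Ss; split; first by apply: SM => //; apply: Sinv.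
by rewrite mulrA inv1. Qed.

Lemma inv_mul s t : S s -> S t -> inv (s * t) = inv t * inv s.
Proof.
move=> Ss St; apply/esym/inv_uniq; first by apply: SM.
split; first by apply: SM; apply: Sinv.
have C := idem_comm (r_idem St) (d_idem Ss).
split.
- have -> : s*t*(inv t*inv s)*(s*t) = s*((t*inv t)*(inv s * s))*t by rewrite !mulrA.
  by rewrite C !mulrA (inv1 Ss) (inv1x _ St).
- have -> : inv t*inv s*(s*t)*(inv t*inv s) = inv t*((inv s * s)*(t*inv t))*inv s by rewrite !mulrA.
  by rewrite -C !mulrA (inv2 St) (inv2x _ Ss).
Qed.

Lemma compl_idem e : idm e -> idm (1 - e).
Proof. move=> Ie; split; first exact: Hcompl.
by rewrite mulrBr mulr1 mulrBl mul1r Ie.2 subrr subr0. Qed.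

Lemma ej_eq (e f : R) : 1 - (1-e)*(1-f) = e + (1-e)*f.
Proof. by rewrite mulrBr mulr1 opprB addrCA subKr addrC. Qed.

Lemma nleq_d x y : nlq x y -> x = y * (inv x * x).
Proof.
case=> Sx [Sy [e [Ie ->]]]; have Se := Ie.1.
rewrite inv_mul // (idem_inv Ie).
have -> : y*(e*inv y*(y*e)) = y*(e*(inv y*y))*e by rewrite !mulrA.
by rewrite (idem_comm Ie (d_idem Sy)) !mulrA (inv1 Sy) (idemx _ Ie).
Qed.

Lemma nleq_antisym x y : nlq x y -> nlq y x -> x = y.
Proof.
case=> Sx [Sy [e [Ie hx]]] [_ [_ [f [If hy]]]].
have yf : y * f = y by rewrite hy -mulrA If.2.
by rewrite hx {2}hy hx -mulrA (idem_comm Ie If) mulrA yf.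
Qed.

Lemma join_crit x y w : S x -> S y -> S w -> nlq x w -> nlq y w ->
  w = x + y * (1 - inv x * x) -> is_join (@GRing.mul R) S x y w.
Proof.
move=> Sx Sy Sw lxw lyw Ew; split => // v lxv lyv.
have [_ [Sv _]] := lxv.
split => //; split => //.
have Idx := d_idem Sx; have Idy := d_idem Sy.
exists (1 - (1 - inv x * x) * (1 - inv y * y)); split.
  by apply: compl_idem; apply: idem_mul; apply: compl_idem.
rewrite ej_eq Ew {1}(nleq_d lxv) {1}(nleq_d lyv) -mulrA -mulrDr.
by rewrite (idem_comm (compl_idem Idx) Idy).
Qed.

Lemma nleq_refl x : S x -> nlq x x.
Proof. move=> Sx; do 2!split=> //; exists 1; split; last by rewrite mulr1.
by split; [apply: S1 | rewrite mulr1]. Qed.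

Lemma join_uniq x y u v : is_join (@GRing.mul R) S x y u -> is_join (@GRing.mul R) S x y v -> u = v.
Proof.
case=> Su lxu lyu Hu [Sv lxv lyv Hv].
by apply: nleq_antisym; [apply: Hu | apply: Hv].
Qed.

Local Notation compat := (ism_compatible (@GRing.mul R) S).
Local Notation isj := (is_join (@GRing.mul R) S).

Lemma compat_idem s t : S s -> S t -> compat s t -> idm (inv s * t) /\ idm (s * inv t).
Proof.
move=> Ss St [s' [t' [Hs Ht Ip Iq]]].
by rewrite (inv_uniq Ss Hs) (inv_uniq St Ht) in Ip Iq.
Qed.

Lemma compat_q s t : S s -> S t -> compat s t -> t * inv s = s * inv t.
Proof.
move=> Ss St C; have [_ Iq] := compat_idem Ss St C.
by rewrite -(idem_inv Iq) inv_mul ?inv_inv //; apply: Sinv.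
Qed.

Lemma join_ex s t : S s -> S t -> compat s t -> isj s t (s + t * (1 - inv s * s)).
Proof.
move=> Ss St C; have [Ip Iq] := compat_idem Ss St C.
have Ids := d_idem Ss; have Idt := d_idem St.
have Sa : S (t * (1 - inv s * s)) by apply: SM => //; apply: Hcompl.
have Su : S (s + t * (1 - inv s * s)).
  apply: Horth => //; exists (inv s), (inv (t * (1 - inv s * s))); split.
  - exact: invP.
  - exact: invP.
  - by rewrite mulrA mulrBr mulr1 (idem_comm Ip Ids) !mulrA (inv2 Ss) subrr.
  - rewrite inv_mul //; last exact: Hcompl.
    by rewrite (idem_inv (compl_idem Ids)) mulrA mulrBr mulr1 mulrA (inv1 Ss) subrr mul0r.
apply: join_crit => //.
- split => //; split => //; exists (inv s * s); split => //.
  by apply/esym; rewrite mulrDl -mulrA mulrBl mul1r Ids.2 subrr mulr0 addr0 mulrA inv1.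
- split => //; split => //; exists (inv t * t); split => //.
  apply/esym; rewrite mulrDl -mulrA mulrBl mul1r mulrBr.
  have e1 : t * (inv t * t) = t by rewrite mulrA inv1.
  have e2 : t * (inv s * s * (inv t * t)) = s * (inv t * t).
    rewrite !mulrA (compat_q Ss St C).
    have -> : s * inv t * s * inv t * t = (s * inv t) * (s * inv t) * t by rewrite !mulrA.
    by rewrite Iq.2.
  by rewrite e1 e2 addrC subrK.
Qed.

Lemma nleq_l a x y : S a -> nlq x y -> nlq (a * x) (a * y).
Proof.
move=> Sa [Sx [Sy [e [Ie Ex]]]]; split; first by apply: SM.
split; first by apply: SM.
by exists e; split => //; rewrite Ex mulrA.
Qed.

Lemma conj_idem a e : S a -> idm e -> idm (inv a * e * a) /\ e * a = a * (inv a * e * a).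
Proof.
move=> Sa Ie; have Se := Ie.1; split.
  split; first by apply: SM => //; apply: SM => //; apply: Sinv.
  have -> : inv a*e*a*(inv a*e*a) = inv a*(e*(a*inv a))*e*a by rewrite !mulrA.
  by rewrite (idem_comm Ie (r_idem Sa)) !mulrA (inv2 Sa) (idemx _ Ie).
have -> : a*(inv a*e*a) = (a*inv a)*e*a by rewrite !mulrA.
by rewrite (idem_comm (r_idem Sa) Ie) -mulrA (inv1 Sa).
Qed.

Lemma nleq_r a x y : S a -> nlq x y -> nlq (x * a) (y * a).
Proof.
move=> Sa [Sx [Sy [e [Ie Ex]]]]; split; first by apply: SM.
split; first by apply: SM.
have [If Ef] := conj_idem Sa Ie.
by exists (inv a * e * a); split => //; rewrite Ex -mulrA Ef mulrA.
Qed.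

Lemma distr s t u a : S s -> S t -> S a -> compat s t -> isj s t u ->
  isj (a * s) (a * t) (a * u) /\ isj (s * a) (t * a) (u * a).
Proof.
move=> Ss St Sa C J.
have Eu := join_uniq J (join_ex Ss St C).
have [Ip Iq] := compat_idem Ss St C.
have Iq' : idm (t * inv s) by rewrite (compat_q Ss St C).
case: J => Su lsu ltu _.
split.
- apply: join_crit; try apply: SM => //; try apply: nleq_l => //.
  rewrite Eu mulrDr mulrA; congr (_ + _); rewrite !mulrBr !mulr1; congr (_ - _).
  rewrite inv_mul //.
  have -> : a*t*(inv s*inv a*(a*s)) = a*((t*inv s)*(inv a*a))*s by rewrite !mulrA.
  by rewrite (idem_comm Iq' (d_idem Sa)) !mulrA (inv1 Sa).
- apply: join_crit; try apply: SM => //; try apply: nleq_r => //.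
  rewrite Eu mulrDl; congr (_ + _).
  rewrite -mulrA mulrBl mul1r !mulrBr mulr1; congr (_ - _).
  rewrite inv_mul //.
  have -> : t*a*(inv a*inv s*(s*a)) = t*((a*inv a)*(inv s*s))*a by rewrite !mulrA.
  by rewrite (idem_comm (r_idem Sa) (d_idem Ss)) !mulrA (inv1x _ Sa).
Qed.


Local Notation isej := (is_ejoin (@GRing.mul R) S).
Local Notation isem := (is_emeet (@GRing.mul R) S).

Lemma eleq_idem x y : elq x y -> y * x = x /\ x * y = x.
Proof.
case=> Ix [Iy [_ [_ [w [Iw Ex]]]]].
have yx : y * x = x by rewrite Ex mulrA Iy.2.
by split => //; rewrite (idem_comm Ix Iy) yx.
Qed.

Lemma mk_eleq x y : idm x -> idm y -> x = y * x -> elq x y.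
Proof. move=> Ix Iy E; do 2!split => //; split; first exact: Ix.1.
split; first exact: Iy.1. by exists x. Qed.

Lemma idem0 : idm 0. Proof. by split; [apply: S0 | rewrite mulr0]. Qed.
Lemma eleq0 e : idm e -> elq 0 e.
Proof. by move=> Ie; apply: mk_eleq => //; [apply: idem0 | rewrite mulr0]. Qed.

Lemma ejoin e f : idm e -> idm f -> isej e f (1 - (1 - e) * (1 - f)).
Proof.
move=> Ie If.
have Iu : idm (1 - (1 - e) * (1 - f)).
  by apply: compl_idem; apply: idem_mul; apply: compl_idem.
split.
- apply: mk_eleq => //; apply/esym.
  rewrite mulrBl mul1r -mulrA (idem_comm (compl_idem If) Ie) mulrA mulrBl mul1r Ie.2.
  by rewrite subrr mul0r subr0.
- apply: mk_eleq => //; apply/esym.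
  by rewrite mulrBl mul1r -mulrA [(1 - f) * f]mulrBl mul1r If.2 subrr mulr0 subr0.
- move=> v lev lfv; have Iv := lev.2.1.
  have [ve _] := eleq_idem lev; have [vf _] := eleq_idem lfv.
  apply: mk_eleq => //.
  rewrite ej_eq mulrDr ve mulrA (idem_comm Iv (compl_idem Ie)) -mulrA vf.
  done.
Qed.

Lemma emeet e f : idm e -> idm f -> isem e f (e * f).
Proof.
move=> Ie If; have Ief := idem_mul Ie If.
split.
- by apply: mk_eleq => //; rewrite mulrA Ie.2.
- by apply: mk_eleq => //; rewrite (idem_comm Ie If) mulrA If.2.
- move=> v lve lvf; have Iv := lve.1.
  have [ev _] := eleq_idem lve; have [fv _] := eleq_idem lvf.
  by apply: mk_eleq => //; rewrite -mulrA fv ev.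
Qed.

Lemma ejoin_uniq e f u v : isej e f u -> isej e f v -> u = v.
Proof.
case=> leu lfu Hu [lev lfv Hv].
by apply: nleq_antisym; [exact: (Hu _ lev lfv).2.2 | exact: (Hv _ leu lfu).2.2].
Qed.

Lemma emeet_uniq e f u v : isem e f u -> isem e f v -> u = v.
Proof.
case=> leu lfu Hu [lev lfv Hv].
by apply: nleq_antisym; [exact: (Hv _ leu lfu).2.2 | exact: (Hu _ lev lfv).2.2].
Qed.

Lemma ebool : idempotents_boolean (@GRing.mul R) S.
Proof.
split.
- by move=> e f Ie If; eexists; apply: ejoin.
- by move=> e f Ie If; eexists; apply: emeet.
- move=> e f g j m1 m2 m3 Ie If Ig Jj M1 M2 M3.
  rewrite -(ejoin_uniq (ejoin If Ig) Jj) in M1.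
  rewrite -(emeet_uniq (emeet Ie (compl_idem (idem_mul (compl_idem If) (compl_idem Ig)))) M1).
  rewrite -(emeet_uniq (emeet Ie If) M2) -(emeet_uniq (emeet Ie Ig) M3).
  have -> : e * (1 - (1 - f) * (1 - g)) = 1 - (1 - e * f) * (1 - e * g).
    rewrite !ej_eq mulrDr mulrA; congr (_ + _).
    rewrite mulrBr mulr1 mulrBl [(1 - e * f) * _]mulrBl mul1r; congr (_ - _).
    have -> : e*f*(e*g) = e*(f*e)*g by rewrite !mulrA.
    by rewrite (idem_comm If Ie) !mulrA Ie.2.
  by apply: ejoin; apply: idem_mul.
- exists 0; split; first exact: idem0.
    by move=> e Ie; apply: eleq0.
  move=> e f lfe; have If := lfe.1; have Ie := lfe.2.1.
  have [ef fe] := eleq_idem lfe.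
  have Ig : idm (e * (1 - f)) by apply: idem_mul => //; apply: compl_idem.
  exists (e * (1 - f)); split.
  + by apply: mk_eleq => //; rewrite mulrA Ie.2.
  + split; [exact: eleq0 | exact: eleq0 |].
    move=> v lvf lvg; have [fv _] := eleq_idem lvf; have [gv _] := eleq_idem lvg.
    have -> : v = 0.
      rewrite -gv -fv mulrA -(mulrA e) mulrBl mul1r If.2 subrr mulr0 mul0r.
      done.
    exact: (eleq0 idem0).
  + split => //; first by apply: mk_eleq => //; rewrite mulrA Ie.2.
    move=> v lfv lgv; have [vf _] := eleq_idem lfv; have [vg _] := eleq_idem lgv.
    have Iv := lfv.2.1.
    have Efg : e = f + e * (1 - f) by rewrite mulrBr mulr1 ef addrC subrK.
    apply: mk_eleq => //.
    by rewrite {2}Efg mulrDr vf vg -Efg.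
Qed.

Lemma main : boolean_inverse_monoid (@GRing.mul R) 1 0 S.
Proof.
split => //.
- by move=> s t Ss St C; eexists; apply: join_ex.
- by move=> s t u a Ss St Sa C J; apply: distr.
- exact: ebool.
Qed.

End Pf.

Theorem lemma3p1 (R : pzRingType) (S : R -> Prop) :
  inverse_monoid_with_zero (@GRing.mul R) 1 0 S ->
  (forall a b, S a -> S b -> ism_orthogonal (@GRing.mul R) 0 S a b -> S (a + b)) ->
  (forall e, idem (@GRing.mul R) S e -> S (1 - e)) ->
  boolean_inverse_monoid (@GRing.mul R) 1 0 S.
Proof. by move=> HS Ho Hc; apply: main. Qed.
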